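(* Let $q$ be a prime power and use the setting of the context. Then $\mathcal C=\bigcup_{i=0}^{q^2+q}\mathcal G_i$ is a $(6,(q^3-1)(q^2+q+1),4;3)_q$ constant-dimension subspace code; that is, it consists of $(q^3-1)(q^2+q+1)$ planes of ${\rm PG}(5,q)$, any two distinct of which meet in at most one point.
   Context: In ${\rm PG}(5,q)$ points are row vectors ${\bf X}=(X_1,\dots,X_6)$; write $X=(X_1,X_2,X_3)$, $Y=(X_4,X_5,X_6)$. Let $\pi_1$ be the plane $X_1=X_2=X_3=0$ and $\pi_2$ the plane $X_4=X_5=X_6=0$. Let $A$ be a Singer cycle of ${\rm GL}(3,q)$, i.e. a $3\times3$ matrix over ${\rm GF}(q)$ of multiplicative order $q^3-1$. For $0\le i\le q^2+q$ let $\mathcal Q_i$ be the quadric of ${\rm PG}(5,q)$ with quadratic form ${\bf Q}_i({\bf X})=XA^iY^T$; each $\mathcal Q_i$ is a non-degenerate hyperbolic quadric $\mathcal Q^+(5,q)$ containing $\pi_1$ and $\pi_2$, and the $\mathcal Q_i$ are pairwise distinct. The planes on $\mathcal Q^+(5,q)$ fall into two classes of size $(q+1)(q^2+1)$ (two planes of the same class meet in exactly one point; planes of different classes are disjoint or meet in a line); since $\pi_1\cap\pi_2=\emptyset$, $\pi_1$ and $\pi_2$ lie in different classes. Let $\mathcal G_i$ be the set of the $q^3-1$ planes of $\mathcal Q_i$ belonging to the same class as $\pi_1$, distinct from $\pi_1$ and disjoint from $\pi_2$. An $(n,M,4;3)_q$ constant-dimension code is a set of $M$ planes of ${\rm PG}(n-1,q)$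 pairwise meeting in at most a point. *)

(* Defs.v *)
From HB Require Import structures.
From mathcomp Require Import all_boot all_order all_algebra all_fingroup all_field.
Set Implicit Arguments. Unset Strict Implicit. Unset Printing Implicit Defensive.
Import GRing.Theory.
Local Open Scope ring_scope.

(* Points of PG(5,q) = nonzero row vectors of F^(3+3); subspaces of F^6 are
   represented canonically by their generating matrix <<M>>%MS (square 6x6),
   so that two subspaces are equal iff their canonical matrices are equal.
   A plane of PG(5,q) is a 3-dimensional vector subspace. *)

Definition singer_cycle (F : finFieldType) (A : 'M[F]_3) : Prop :=
  A ^+ (#|F| ^ 3 - 1) = 1 /\
  forall k : nat, (0 < k)%N -> (k < #|F| ^ 3 - 1)%N -> A ^+ k != 1.

Definition qform (F : finFieldType) (A : 'M[F]_3) (i : nat)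
  (v : 'rV[F]_(3 + 3)) : F :=
  (lsubmx v *m A ^+ i *m (rsubmx v)^T) 0 0.

Definition is_subspace (F : finFieldType) (U : 'M[F]_(3 + 3)) : bool :=
  U == <<U>>%MS.

Definition is_plane (F : finFieldType) (U : 'M[F]_(3 + 3)) : bool :=
  is_subspace U && (\rank U == 3)%N.

(* pi_1 : X_1 = X_2 = X_3 = 0 ;  pi_2 : X_4 = X_5 = X_6 = 0 *)
Definition pi1 (F : finFieldType) : 'M[F]_(3 + 3) :=
  <<row_mx (0 : 'M[F]_3) (1%:M : 'M[F]_3)>>%MS.
Definition pi2 (F : finFieldType) : 'M[F]_(3 + 3) :=
  <<row_mx (1%:M : 'M[F]_3) (0 : 'M[F]_3)>>%MS.

Definition on_quadric (F : finFieldType) (A : 'M[F]_3) (i : nat)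
  (U : 'M[F]_(3 + 3)) : bool :=
  [forall v : 'rV[F]_(3 + 3), (v <= U)%MS ==> (qform A i v == 0)].

(* Two planes of Q^+(5,q) are in the same class iff their intersection has
   odd (vector) dimension, i.e. they meet in a point or coincide. *)
Definition same_class (F : finFieldType) (U V : 'M[F]_(3 + 3)) : bool :=
  odd (\rank (U :&: V)%MS).

Definition G (F : finFieldType) (A : 'M[F]_3) (i : nat) : {set 'M[F]_(3 + 3)} :=
  [set U : 'M[F]_(3 + 3) | [&& is_plane U, on_quadric A i U,
     same_class U (pi1 F), U != pi1 F & \rank (U :&: pi2 F)%MS == 0%N]].

Definition code (F : finFieldType) (A : 'M[F]_3) : {set 'M[F]_(3 + 3)} :=
  \bigcup_(i < #|F| ^ 2 + #|F| + 1) G A i.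

(* Main.v *)
Require Import Defs.
From HB Require Import structures.
From mathcomp Require Import all_boot all_order all_algebra all_fingroup all_field.
From mathcomp Require Import ring zify.
Import GRing.Theory.
Set Implicit Arguments. Unset Strict Implicit.
Local Open Scope ring_scope.

Section Gen.
Variable F : fieldType.

Definition gmd {m n} (M : 'M[F]_(m.+1, n.+1)) (a b : nat) := M (inord a) (inord b).
Definition gm {m n} := locked (@gmd m n).
Lemma gmE m n (M : 'M[F]_(m.+1, n.+1)) i j : M i j = gm M i j.
Proof. by rewrite /gm -lock /gmd !inord_val. Qed.

Definition vec3 (a b c : F) : 'rV[F]_3 :=
  \row_(j < 3) (if (j : nat) == 0%N then a else if (j : nat) == 1%N then b else c).
Definition rows3 (x y z : 'rV[F]_3) : 'M[F]_3 :=
  \matrix_(i < 3, j < 3) (if (i : nat) == 0%N then x 0 j else if (i : nat) == 1%N then y 0 j else z 0 j).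
Definition crossmx (s : 'rV[F]_3) : 'M[F]_3 :=
  \matrix_(i < 3, j < 3)
   match (i : nat), (j : nat) with
   | 0, 1 => s 0 2 | 0, 2 => - s 0 1 | 1, 0 => - s 0 2
   | 1, 2 => s 0 0 | 2, 0 => s 0 1 | 2, 1 => - s 0 0 | _, _ => 0 end.

Lemma det3 (M : 'M[F]_3) : \det M =
  M 0 0 * M 1 1 * M 2 2 - M 0 0 * M 1 2 * M 2 1
  - M 0 1 * M 1 0 * M 2 2 + M 0 1 * M 1 2 * M 2 0
  + M 0 2 * M 1 0 * M 2 1 - M 0 2 * M 1 1 * M 2 0.
Proof.
rewrite (expand_det_row _ 0) !big_ord_recl big_ord0 /cofactor.
rewrite !(expand_det_row _ 0) !big_ord_recl !big_ord0 /cofactor !det_mx11 !mxE /=.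
rewrite !gmE /bump /=. ring.
Qed.

Lemma b00 : bump 0 0 = 1%N. Proof. by []. Qed.
Lemma b01 : bump 0 (bump 0 0) = 2%N. Proof. by []. Qed.
Lemma m1 : (1 %% 3 = 1)%N. Proof. by []. Qed.
Lemma m2 : (2 %% 3 = 2)%N. Proof. by []. Qed.
Lemma m3 : ((1 %% 3 + 1 %% 3) %% 3 = 2)%N. Proof. by []. Qed.
Ltac ex3 := rewrite ?det3 !mxE ?big_ord_recl ?big_ord0 /= ?mxE /= ?big_ord_recl ?big_ord0 /= ?mxE /= ;
  rewrite ?gmE ?b01 ?b00 ?m3 ?m2 ?m1 /=.

Lemma cross_form (s x y : 'rV[F]_3) :
  (x *m crossmx s *m y^T) 0 0 = \det (rows3 x y s).
Proof. ex3. ring. Qed.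


Lemma cross_alt (s x : 'rV[F]_3) : (x *m crossmx s *m x^T) 0 0 = 0.
Proof. ex3. ring. Qed.

Lemma vec3_form (Sm : 'M[F]_3) (a b c : F) : (vec3 a b c *m Sm *m (vec3 a b c)^T) 0 0 =
  a * a * gm Sm 0%N 0%N + a * b * gm Sm 0%N 1%N + a * c * gm Sm 0%N 2%N +
  b * a * gm Sm 1%N 0%N + b * b * gm Sm 1%N 1%N + b * c * gm Sm 1%N 2%N +
  c * a * gm Sm 2%N 0%N + c * b * gm Sm 2%N 1%N + c * c * gm Sm 2%N 2%N.
Proof. ex3. ring. Qed.

Lemma alt_cross (Sm : 'M[F]_3) : (forall x : 'rV[F]_3, (x *m Sm *m x^T) 0 0 = 0) ->
  Sm = crossmx (vec3 (Sm 1 2) (Sm 2 0) (Sm 0 1)).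
Proof.
move=> H.
have h1 := H (vec3 1 0 0); have h2 := H (vec3 0 1 0); have h3 := H (vec3 0 0 1).
have h4 := H (vec3 1 1 0); have h5 := H (vec3 1 0 1); have h6 := H (vec3 0 1 1).
rewrite !vec3_form in h1 h2 h3 h4 h5 h6.
have e00 : gm Sm 0%N 0%N = 0 by rewrite -h1; ring.
have e11 : gm Sm 1%N 1%N = 0 by rewrite -h2; ring.
have e22 : gm Sm 2%N 2%N = 0 by rewrite -h3; ring.
have e10 : gm Sm 1%N 0%N = - gm Sm 0%N 1%N.
  apply/eqP; rewrite -subr_eq0 opprK; apply/eqP; rewrite -h4 e00 e11; ring.
have e20 : gm Sm 2%N 0%N = - gm Sm 0%N 2%N.
  apply/eqP; rewrite -subr_eq0 opprK; apply/eqP; rewrite -h5 e00 e22; ring.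
have e21 : gm Sm 2%N 1%N = - gm Sm 1%N 2%N.
  apply/eqP; rewrite -subr_eq0 opprK; apply/eqP; rewrite -h6 e11 e22; ring.
apply/matrixP => i j; rewrite !mxE.
rewrite !gmE.
case: i => [[|[|[|i]]] Hi] //; case: j => [[|[|[|j]]] Hj] //=;
  rewrite /vec3 ?mxE /= ?gmE /=;
  rewrite ?e00 ?e11 ?e22 ?e10 ?e20 ?e21 ?opprK //.
Qed.

Lemma minor_rank (X : 'M[F]_3) (i1 i2 j1 j2 : 'I_3) : (\rank X <= 1)%N ->
  X i1 j1 * X i2 j2 = X i1 j2 * X i2 j1.
Proof.
move=> rX.
pose f := fun a : 'I_2 => if a == 0 then i1 else i2.
pose g := fun b : 'I_2 => if b == 0 then j1 else j2.
have EY : mxsub f g X = rowsub f 1%:M *m X *m colsub g 1%:M.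
  rewrite mul_rowsub_mx mul1mx mulmx_colsub mulmx1.
  by apply/matrixP => a b; rewrite !mxE.
have rY : (\rank (mxsub f g X) <= 1)%N.
  rewrite EY; apply: leq_trans (mxrankM_maxl _ _) _.
  by apply: leq_trans (mxrankM_maxr _ _) _.
have : \det (mxsub f g X) = 0.
  apply/eqP; apply: contraLR rY; rewrite -unitfE -unitmxE -row_free_unit.
  by rewrite /row_free => /eqP ->.
rewrite (expand_det_row _ 0) !big_ord_recl big_ord0 /cofactor !det_mx11 !mxE /=.
rewrite /f /g /=.
move=> h; apply/eqP; rewrite -subr_eq0; apply/eqP; rewrite -h.
rewrite /bump /=.
ring.
Qed.


Lemma rank_cross (u : 'rV[F]_3) : u != 0 -> \rank (crossmx u) = 2%N.
Proof.
move=> nu; apply/eqP; rewrite eqn_leq; apply/andP; split.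
  rewrite -ltnS ltn_neqAle rank_leq_col andbT.
  apply/negP => /eqP h.
  have : crossmx u \in unitmx by rewrite -row_free_unit /row_free h.
  rewrite unitmxE unitfE det3 !mxE /=.
  by move=> /negP; apply; apply/eqP; ring.
rewrite ltnNge; apply/negP => h.
have h1 := minor_rank 1 2 1 2 h; have h2 := minor_rank 0 2 0 2 h; have h3 := minor_rank 0 1 0 1 h.
move: h1 h2 h3; rewrite !mxE /= !mul0r !mulrN !mulNr => /eqP; rewrite eq_sym oppr_eq0 mulf_eq0 orbb => /eqP e0.
move=> /eqP; rewrite eq_sym oppr_eq0 mulf_eq0 orbb => /eqP e1.
move=> /eqP; rewrite eq_sym oppr_eq0 mulf_eq0 orbb => /eqP e2.
move/eqP: nu; apply; apply/rowP => j; rewrite mxE.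
by case: j => [[|[|[|j]]] Hj] //=; [rewrite -e0 | rewrite -e1 | rewrite -e2]; congr (u 0 _); apply: val_inj.
Qed.


Lemma rows3_mul (e f g : 'rV[F]_3) (D : 'M[F]_3) :
  rows3 (e *m D) (f *m D) (g *m D) = rows3 e f g *m D.
Proof.
apply/matrixP => i j; rewrite !mxE.
by case: i => [[|[|[|i]]] Hi] //=; apply: eq_bigr => k _; rewrite !mxE.
Qed.

Lemma vec3_rows3 a b c (x y z : 'rV[F]_3) :
  vec3 a b c *m rows3 x y z = a *: x + b *: y + c *: z.
Proof.
apply/rowP => j; rewrite !mxE !big_ord_recl big_ord0 !mxE /=.
rewrite !gmE /bump /=. ring.
Qed.

Lemma conv (D C : 'M[F]_3) (e : 'rV[F]_3) : D \in unitmx ->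
  \det (rows3 (e *m D) (e *m D *m C) (vec3 0 0 1 *m D)) =
  \det (rows3 e (e *m (D *m C *m invmx D)) (vec3 0 0 1)) * \det D.
Proof.
move=> uD; rewrite -det_mulmx -rows3_mul; congr (\det (rows3 _ _ _)).
by rewrite !mulmxA mulmxKV.
Qed.

Lemma det_conj (D G : 'M[F]_3) a : D \in unitmx ->
  \det (invmx D *m G *m D - a%:M) = \det (G - a%:M).
Proof.
move=> uD.
have -> : invmx D *m G *m D - a%:M = invmx D *m (G - a%:M) *m D.
  by rewrite mulmxBr mulmxBl mul_mx_scalar -scalemxAl mulVmx // scalemx1.
rewrite !det_mulmx det_inv mulrC mulrA divrr ?mul1r // -unitmxE.
Qed.

Lemma finA (C : 'M[F]_3) (w1 w2 s : 'rV[F]_3) :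
  \det (rows3 w1 w2 s) != 0 ->
  \det (rows3 w1 (w1 *m C) s) = 0 -> \det (rows3 w2 (w2 *m C) s) = 0 ->
  \det (rows3 (w1 + w2) ((w1 + w2) *m C) s) = 0 ->
  exists a, \det (C - a%:M) = 0.
Proof.
set D := rows3 w1 w2 s => nD.
have uD : D \in unitmx by rewrite unitmxE unitfE.
have Ew1 : w1 = vec3 1 0 0 *m D by rewrite vec3_rows3 !scale1r !scale0r !addr0.
have Ew2 : w2 = vec3 0 1 0 *m D by rewrite vec3_rows3 !scale1r !scale0r add0r addr0.
have Ew12 : w1 + w2 = vec3 1 1 0 *m D by rewrite vec3_rows3 !scale1r !scale0r addr0.
have Es : s = vec3 0 0 1 *m D by rewrite vec3_rows3 !scale1r !scale0r !add0r.
set G := D *m C *m invmx D.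
have HC : C = invmx D *m G *m D by rewrite /G !mulmxA mulVmx // mul1mx mulmxKV.
rewrite {1 2}Ew1 {1}Es conv // => /eqP; rewrite mulf_eq0 (negPf nD) orbF => /eqP h1.
rewrite {1 2}Ew2 {1}Es conv // => /eqP; rewrite mulf_eq0 (negPf nD) orbF => /eqP h2.
rewrite {1 2}Ew12 {1}Es conv // => /eqP; rewrite mulf_eq0 (negPf nD) orbF => /eqP h3.
rewrite -/G in h1 h2 h3.
clearbody G.
move: h1 h2 h3; ex3 => h1 h2 h3.
have g01 : gm G 0 1 = 0 by rewrite -h1; ring.
have g10 : gm G 1 0 = 0 by rewrite -oppr0 -h2; ring.
have g11 : gm G 1 1 = gm G 0 0.
  by apply/eqP; rewrite -subr_eq0; apply/eqP; rewrite -h3 g01 g10; ring.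
exists (gm G 0 0); rewrite HC det_conj //.
ex3. rewrite g01 g10 g11. ring.
Qed.



Lemma finB (C : 'M[F]_3) (w1 w2 s : 'rV[F]_3) :
  \det (rows3 w1 w2 s) != 0 ->
  \det (rows3 w1 (w1 *m C) s) = 0 ->
  \det (rows3 (w1 + s) ((w1 + s) *m C) s) = 0 ->
  exists a, \det (C - a%:M) = 0.
Proof.
set D := rows3 w1 w2 s => nD.
have uD : D \in unitmx by rewrite unitmxE unitfE.
have Ew1 : w1 = vec3 1 0 0 *m D by rewrite vec3_rows3 !scale1r !scale0r !addr0.
have Ew1s : w1 + s = vec3 1 0 1 *m D by rewrite vec3_rows3 !scale1r !scale0r addr0.
have Es : s = vec3 0 0 1 *m D by rewrite vec3_rows3 !scale1r !scale0r !add0r.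
set G := D *m C *m invmx D.
have HC : C = invmx D *m G *m D by rewrite /G !mulmxA mulVmx // mul1mx mulmxKV.
rewrite {1 2}Ew1 {1}Es conv // => /eqP; rewrite mulf_eq0 (negPf nD) orbF => /eqP h1.
rewrite {1 2}Ew1s {1}Es conv // => /eqP; rewrite mulf_eq0 (negPf nD) orbF => /eqP h3.
rewrite -/G in h1 h3.
clearbody G.
move: h1 h3; ex3 => h1 h3.
have g01 : gm G 0 1 = 0 by rewrite -h1; ring.
have g21 : gm G 2 1 = 0 by rewrite -h3 g01; ring.
exists (gm G 1 1); rewrite HC det_conj //.
ex3. rewrite g01 g21. ring.
Qed.


Lemma rows3_unit (x y s : 'rV[F]_3) :
  (3 <= \rank (s + x + y)%MS)%N -> \det (rows3 x y s) != 0.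
Proof.
move=> r3; rewrite -unitfE -unitmxE -row_free_unit /row_free eqn_leq rank_leq_col /=.
apply: leq_trans r3 (mxrankS _).
rewrite !addsmx_sub; apply/andP; split; [apply/andP; split|].
- by apply: (eq_row_sub (Ordinal (isT : (2 < 3)%N))); apply/rowP => j; rewrite !mxE.
- by apply: (eq_row_sub (Ordinal (isT : (0 < 3)%N))); apply/rowP => j; rewrite !mxE.
- by apply: (eq_row_sub (Ordinal (isT : (1 < 3)%N))); apply/rowP => j; rewrite !mxE.
Qed.

Lemma rank_strict m1 (V : 'M[F]_(m1, 3)) (w : 'rV[F]_3) :
  ~~ (w <= V)%MS -> (\rank V < \rank (V + w)%MS)%N.
Proof.
move=> nw; apply: rank_ltmx; rewrite ltmxE addsmxSl /=.
apply: contra nw => h; exact: submx_trans (addsmxSr _ _) h.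
Qed.

Lemma core (W C : 'M[F]_3) (s : 'rV[F]_3) :
  (2 <= \rank W)%N -> s != 0 ->
  (forall x : 'rV[F]_3, (x <= W)%MS -> \det (rows3 x (x *m C) s) = 0) ->
  exists a, \det (C - a%:M) = 0.
Proof.
move=> rW ns HW.
have rs : \rank s = 1%N by rewrite rank_rV ns.
have nWs : ~~ (W <= s)%MS.
  apply/negP => h; have := mxrankS h; rewrite rs => h2.
  by have := leq_trans rW h2.
case/row_subPn: nWs => i1 nw1; set w1 := row i1 W.
have w1W : (w1 <= W)%MS by apply: row_sub.
have r2 : (2 <= \rank (s + w1)%MS)%N by have := rank_strict nw1; rewrite rs.
have r2' : (\rank (s + w1)%MS <= 2)%N.
  apply: leq_trans (mxrank_adds_leqif _ _) _.
  by rewrite rs add1n ltnS rank_leq_row.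
case sW: (s <= W)%MS.
- have n1 : ~~ (1%:M <= s + w1)%MS.
    apply/negP => h; have := mxrankS h; rewrite mxrank1 => h2.
    by have := leq_trans h2 r2'.
  case/row_subPn: n1 => j nw2; set w2 := row j (1%:M : 'M[F]_3).
  have r3 : (3 <= \rank (s + w1 + w2)%MS)%N.
    by apply: leq_trans (rank_strict nw2); rewrite ltnS.
  apply: (finB (rows3_unit r3)).
    exact: HW.
  by apply: HW; rewrite addmx_sub.
- have nW2 : ~~ (W <= s + w1)%MS.
    apply/negP => h.
    have := mxrank_leqif_eq h => /leqifP.
    case: ifP => [/andP [_ h2] _ | _ h3].
      by move: sW; rewrite (submx_trans _ h2) // addsmxSl.
    by have := leq_ltn_trans (leq_trans r2' rW) h3; rewrite ltnn.
  case/row_subPn: nW2 => i2 nw2; set w2 := row i2 W.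
  have w2W : (w2 <= W)%MS by apply: row_sub.
  have r3 : (3 <= \rank (s + w1 + w2)%MS)%N.
    by apply: leq_trans (rank_strict nw2); rewrite ltnS.
  apply: (finA (rows3_unit r3)).
  + exact: HW.
  + exact: HW.
  + by apply: HW; rewrite addmx_sub.
Qed.


Lemma KR (B : 'M[F]_3) (s t : 'rV[F]_3) : s != 0 ->
  (forall a, \det (B - a%:M) != 0) ->
  (2 <= \rank (crossmx s *m B - crossmx t)%R)%N.
Proof.
move=> ns hB; rewrite ltnNge; apply/negP => h.
set X := crossmx s *m B - crossmx t in h.
have rW : (2 <= \rank (kermx X))%N by rewrite mxrank_ker; move: h; clear; lia.
have [a ha] : exists a, \det (B^T - a%:M) = 0.
  apply: (core rW ns) => x /sub_kermxP hx.
  rewrite -cross_form trmx_mul trmxK !mulmxA.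
  have -> : x *m crossmx s *m B = x *m crossmx t.
    by apply/eqP; rewrite -subr_eq0 -mulmxA -mulmxBr; apply/eqP.
  exact: cross_alt.
move: (hB a); rewrite -det_tr linearB /= tr_scalar_mx ha eqxx //.
Qed.


Definition plane (M : 'M[F]_3) : 'M[F]_(3 + 3) := <<row_mx M 1%:M>>%MS.

Lemma sub_plane m (v : 'M[F]_(m, 3 + 3)) M :
  (v <= plane M)%MS -> v = rsubmx v *m row_mx M 1%:M.
Proof.
rewrite /plane genmxE => /submxP [D ->]. by rewrite mul_mx_row mulmx1 row_mxKr mul_mx_row mulmx1.
Qed.

Lemma plane_rank M : \rank (plane M) = 3%N.
Proof.
rewrite /plane genmxE; apply/eqP; rewrite eqn_leq rank_leq_row /=.
have : row_mx M 1%:M *m col_mx 0 1%:M = 1%:M :> 'M[F]_3.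
  by rewrite mul_row_col mulmx0 mulmx1 add0r.
by move=> h; have := mxrankM_maxl (row_mx M 1%:M) (col_mx 0 1%:M); rewrite h mxrank1.
Qed.

Lemma plane_cap (M M' : 'M[F]_3) :
  \rank (plane M :&: plane M')%MS = (3 - \rank (M - M')%R)%N.
Proof.
set K := kermx (M - M').
have eKR : (plane M :&: plane M' :=: K *m row_mx M 1%:M)%MS.
  apply/eqmxP/andP; split.
    set v := (plane M :&: plane M')%MS.
    have h1 := sub_plane (capmxSl (plane M) (plane M')).
    have h2 := sub_plane (capmxSr (plane M) (plane M')).
    rewrite -/v in h1 h2.
    have hK : (rsubmx v <= K)%MS.
      apply/sub_kermxP; rewrite mulmxBr; apply/eqP; rewrite subr_eq0; apply/eqP.
      have := congr1 lsubmx h1; have := congr1 lsubmx h2.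
      rewrite !mul_mx_row !row_mxKl => <- ->; done.
    by rewrite {1}h1; apply: submxMr.
  rewrite sub_capmx !genmxE submxMl /=.
  have -> : K *m row_mx M 1%:M = K *m row_mx M' 1%:M.
    rewrite !mul_mx_row; congr row_mx.
    by apply/eqP; rewrite -subr_eq0 -mulmxBr; apply/eqP; apply: mulmx_ker.
  exact: submxMl.
rewrite eKR mxrankMfree ?mxrank_ker //.
by rewrite /row_free -genmxE -/(plane M) plane_rank.
Qed.

Lemma plane_inj : injective plane.
Proof.
move=> M M' e; have := plane_cap M M'; rewrite e.
have : (3 <= \rank (plane M' :&: plane M')%MS)%N.
  by rewrite -{1}(plane_rank M'); apply: mxrankS; rewrite sub_capmx submx_refl.
move=> h1 h2; rewrite h2 in h1.
apply/eqP; rewrite -subr_eq0 -mxrank_eq0; move: h1; clear; case: (\rank _) => // n. lia.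
Qed.

Definition pi2m : 'M[F]_(3 + 3) := <<row_mx (1%:M : 'M[F]_3) (0 : 'M[F]_3)>>%MS.

Lemma plane_pi2 M : \rank (plane M :&: pi2m)%MS = 0%N.
Proof.
apply/eqP; rewrite mxrank_eq0 -submx0.
set v := (plane M :&: pi2m)%MS.
have h1 := sub_plane (capmxSl (plane M) pi2m).
have : (v <= pi2m)%MS by apply: capmxSr.
rewrite /pi2m genmxE => /submxP [D eD].
have : rsubmx v = 0 by rewrite eD mul_mx_row mulmx0 row_mxKr.
by move=> h; rewrite -/v h mul0mx in h1; rewrite h1.
Qed.

Lemma plane_exists (U : 'M[F]_(3 + 3)) :
  U = <<U>>%MS -> \rank U = 3%N -> \rank (U :&: pi2m)%MS = 0%N ->
  exists M, U = plane M.
Proof.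
move=> eU rU rc.
set U2 := rsubmx U.
have hK : kermx U2 *m U = 0.
  suff sub : (kermx U2 *m U <= U :&: pi2m)%MS.
    by apply/eqP; rewrite -mxrank_eq0 -leqn0; have := mxrankS sub; rewrite rc.
  rewrite sub_capmx submxMl /= /pi2m genmxE.
  have -> : kermx U2 *m U = kermx U2 *m lsubmx U *m row_mx 1%:M 0.
    by rewrite -{1}[U]hsubmxK mul_mx_row mulmx_ker mul_mx_row mulmx1 mulmx0.
  by rewrite submxMl.
have rU2 : \rank U2 = 3%N.
  have : (kermx U2 <= kermx U)%MS by apply/sub_kermxP.
  move/mxrankS; rewrite !mxrank_ker rU => h.
  apply/eqP; rewrite eqn_leq rank_leq_col /=; move: h; clear; lia.
have : row_full U2 by rewrite /row_full rU2.
case/row_fullP => P hP.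
exists (P *m lsubmx U).
have sub1 : (plane (P *m lsubmx U) <= U)%MS.
  rewrite /plane genmxE -hP -mul_mx_row hsubmxK; exact: submxMl.
have := mxrank_leqif_eq sub1; rewrite plane_rank rU => /leqifP.
case: ifP => [/andP [_ h2] _ | _]; last by rewrite ltnn.
apply: (etrans eU); rewrite /plane; apply: eq_genmx; apply/eqmxP/andP; split.
  by move: h2; rewrite /plane genmxE.
by move: sub1; rewrite /plane genmxE.
Qed.

End Gen.

Section Fin.
Variable F : finFieldType.
Variable A : 'M[F]_3.
Hypothesis sA : singer_cycle A.

Local Notation q := #|F|.
Local Notation N := (#|F| ^ 3 - 1)%N.

Lemma q_gt1 : (1 < q)%N.
Proof. by apply/card_gt1P; exists 0, 1; split => //; rewrite eq_sym oner_neq0. Qed.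

Lemma N_gt0 : (0 < N)%N.
Proof. have := q_gt1; clear; nia. Qed.

Lemma A_unit : A \is a GRing.unit.
Proof.
case: sA => hN _; apply/unitrP; exists (A ^+ N.-1).
by rewrite -exprS -exprSr prednK ?hN //; exact: N_gt0.
Qed.

Lemma scalar_mxXn (a : F) n : (a%:M : 'M[F]_3) ^+ n = (a ^+ n)%:M.
Proof. by elim: n => [|n IH] //; rewrite !exprS IH scalar_mxM. Qed.

Lemma d_le3 : (degree_mxminpoly A <= 3)%N.
Proof.
have h := mxminpoly_dvd_char A.
have := dvdp_leq _ h; rewrite size_mxminpoly size_char_poly ltnS; apply.
by rewrite -size_poly_eq0 size_char_poly.
Qed.

Definition KA := [set B : 'M[F]_3 | (mxvec B <= powers_mx A (degree_mxminpoly A))%MS].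

Lemma horner_KA p : horner_mx A p \in KA.
Proof. by rewrite inE; exact: horner_mx_mem. Qed.

Lemma card_KA : (#|KA| <= q ^ 3)%N.
Proof.
pose f := fun u : 'rV[F]_(degree_mxminpoly A) => horner_mx A (rVpoly u).
have sub : KA \subset f @: setT.
  apply/subsetP => B; rewrite inE => hB; apply/imsetP.
  exists (mxvec B *m pinvmx (powers_mx A (degree_mxminpoly A))); first by rewrite inE.
  by rewrite /f -[rVpoly _]/(mx_inv_horner A B) mx_inv_hornerK.
apply: leq_trans (subset_leq_card sub) _.
apply: leq_trans (leq_imset_card _ _) _.
rewrite cardsT card_mx mul1n; apply: leq_pexp2l; last exact: d_le3.
by apply: ltnW; exact: q_gt1.
Qed.

Definition Pw := [set A ^+ (val m) | m : 'I_N].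

Lemma Pw_unit B : B \in Pw -> B \is a GRing.unit.
Proof. by case/imsetP => m _ ->; apply: unitrX; exact: A_unit. Qed.

Lemma card_Pw : #|Pw| = N.
Proof.
rewrite card_imset ?card_ord // => i j e.
case: sA => _ hk.
wlog lt : i j e / (i < j)%N.
  move=> H; case: (ltngtP i j) => [h|h|h]; first exact: H.
    by apply/esym/H.
  exact: val_inj.
have hj : (j - i < N)%N by have := ltn_ord j; clear -lt; lia.
have := hk (j - i)%N; rewrite subn_gt0 lt hj => /(_ isT isT).
suff -> : A ^+ (j - i) = 1 by rewrite eqxx.
have : A ^+ i * A ^+ (j - i) = A ^+ i * 1 by rewrite -exprD subnKC ?(ltnW lt) // mulr1.
by apply: mulrI; apply: unitrX; exact: A_unit.
Qed.

Lemma KA_unit B : B \in KA -> B != 0 -> B \is a GRing.unit.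
Proof.
move=> hB nB.
have sub : 0 |: Pw \subset KA.
  apply/subsetP => C; rewrite in_setU1 => /orP [/eqP -> | hC].
    by rewrite inE linear0 sub0mx.
  by case/imsetP: hC => m _ ->; have := horner_KA ('X^m); rewrite rmorphXn /= horner_mx_X.
have n0 : 0 \notin Pw by apply/negP => /Pw_unit; rewrite unitr0.
have e : KA = 0 |: Pw.
  apply/esym/eqP; rewrite eqEcard sub cardsU1 n0 card_Pw /=.
  apply: leq_trans card_KA _; have := N_gt0; clear; move: (#|F| ^ 3)%N => t; lia.
move: hB; rewrite e !inE (negPf nB) /=; exact: Pw_unit.
Qed.

Lemma eigen_free k : (0 < k)%N -> (k < q ^ 2 + q + 1)%N ->
  forall a : F, \det (A ^+ k - a%:M) != 0.
Proof.
move=> k0 kq a.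
have hB : A ^+ k - a%:M \in KA.
  by have := horner_KA ('X^k - a%:P); rewrite rmorphB rmorphXn /= horner_mx_X horner_mx_C.
case: (eqVneq (A ^+ k - a%:M) 0) => [e | nB]; last first.
  by rewrite -unitfE -unitmxE; exact: KA_unit.
exfalso; move/eqP: e; rewrite subr_eq0 => /eqP e.
have a0 : a != 0.
  apply/negP => /eqP a0; have : A ^+ k \is a GRing.unit by apply: unitrX; exact: A_unit.
  by rewrite e a0 raddf0 unitr0.
have aq : a ^+ q.-1 = 1.
  apply: (mulfI a0); rewrite mulr1 -exprS prednK ?expf_card //.
  by apply: ltnW; exact: q_gt1.
case: sA => _ hk.
have := hk (k * q.-1)%N.
have q1 := q_gt1.
rewrite muln_gt0 k0 /= -subn1 subn_gt0 q1 /=.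
have -> : (k * (q - 1) < N)%N = true.
  apply/idP; clear -q1 kq k0; nia.
by rewrite subn1 exprM e scalar_mxXn aq => /(_ isT isT); rewrite eqxx.
Qed.


Local Notation n := (#|F| ^ 2 + #|F| + 1)%N.

Definition Mof (i : nat) (s : 'rV[F]_3) : 'M[F]_3 := crossmx s *m A ^- i.

Lemma Mof_mul i s : Mof i s *m A ^+ i = crossmx s.
Proof. by rewrite /Mof -mulmxA mulVmx ?mulmx1 // unitrX // A_unit. Qed.

Lemma rank_mulA (X : 'M[F]_3) i : \rank (X *m A ^+ i) = \rank X.
Proof. by rewrite mxrankMfree // row_free_unit unitrX // A_unit. Qed.

Lemma rank_mulAV (X : 'M[F]_3) i : \rank (X *m A ^- i) = \rank X.
Proof. by rewrite mxrankMfree // row_free_unit unitrV unitrX // A_unit. Qed.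

Lemma crossmxB (s t : 'rV[F]_3) : crossmx s - crossmx t = crossmx (s - t).
Proof.
apply/matrixP => i j; rewrite !mxE.
case: i => [[|[|[|i]]] Hi] //; case: j => [[|[|[|j]]] Hj] //=; by rewrite ?mxE ?subrr ?opprB ?opprK // addrC.
Qed.

Lemma crossmx0 : crossmx 0 = 0 :> 'M[F]_3.
Proof.
apply/matrixP => i j; rewrite !mxE.
by case: i => [[|[|[|i]]] Hi] //; case: j => [[|[|[|j]]] Hj] //=; rewrite ?oppr0.
Qed.

Lemma Mof_diff i j s t : (i < n)%N -> (j < n)%N -> s != 0 -> t != 0 ->
  (i, s) != (j, t) -> (2 <= \rank (Mof i s - Mof j t)%R)%N.
Proof.
wlog le : i j s t / (i <= j)%N.
  move=> H hi hj hs ht ne; case: (leqP i j) => h; first exact: H.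
  rewrite -mxrank_opp opprB; apply: H => //; first exact: ltnW.
  by rewrite eq_sym.
move=> hi hj hs ht ne.
rewrite -(rank_mulA _ j) mulmxBl Mof_mul.
case: (ltngtP i j) le => // [lt | eij] _.
  have -> : Mof i s *m A ^+ j = crossmx s *m A ^+ (j - i).
    have eA : A ^+ j = A ^+ i *m A ^+ (j - i) by rewrite -{1}(subnKC (ltnW lt)) exprD.
    by rewrite eA mulmxA Mof_mul.
  apply: KR => //; apply: eigen_free; first by rewrite subn_gt0.
  by apply: leq_ltn_trans hj; exact: leq_subr.
rewrite -eij Mof_mul crossmxB rank_cross //.
rewrite subr_eq0; apply: contra ne => /eqP ->; by rewrite eij.
Qed.


Lemma rank_Mof i s : s != 0 -> \rank (Mof i s) = 2%N.
Proof. by move=> ns; rewrite /Mof rank_mulAV rank_cross. Qed.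

Lemma G_mem i U : (U \in G A i) =
  [exists s : 'rV[F]_3, (s != 0) && (U == plane (Mof i s))].
Proof.
apply/idP/existsP.
  rewrite inE => /and5P [/andP [/eqP eU /eqP rU] hq hc hn /eqP hp].
  have [M eM] := plane_exists eU rU hp.
  have halt : forall y : 'rV[F]_3, (y *m (M *m A ^+ i) *m y^T) 0 0 = 0.
    move=> y; move/forallP: hq => /(_ (y *m row_mx M 1%:M)) /implyP.
    rewrite eM /plane genmxE submxMl => /(_ isT) /eqP.
    by rewrite /qform mul_mx_row row_mxKl row_mxKr mulmx1 !mulmxA.
  have := alt_cross halt; set s := vec3 _ _ _ => eMs.
  have eM' : M = Mof i s.
    by rewrite /Mof -eMs -mulmxA mulmxV ?mulmx1 // unitrX // A_unit.
  exists s; rewrite -eM' eM eqxx andbT.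
  apply: contra hn => /eqP s0; rewrite eM eM' s0 /Mof crossmx0 mul0mx.
  by [].
case=> s /andP [ns /eqP ->].
rewrite inE; apply/and5P; split.
- by rewrite /is_plane /is_subspace /plane genmx_id eqxx plane_rank.
- apply/forallP => v; apply/implyP => hv.
  have ev := sub_plane hv; set y := rsubmx v in ev.
  rewrite /qform ev mul_mx_row row_mxKl row_mxKr mulmx1 -(mulmxA y) Mof_mul.
  by rewrite cross_alt.
- rewrite /same_class.
  have -> : pi1 F = plane 0 by [].
  by rewrite plane_cap subr0 rank_Mof.
- have -> : pi1 F = plane 0 by [].
  apply/negP => /eqP /plane_inj e.
  by have := rank_Mof i ns; rewrite e mxrank0.
- by rewrite (plane_pi2 (Mof i s)).
Qed.


Lemma code_mem U : (U \in code A) =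
  [exists p : 'I_n * 'rV[F]_3, (p.2 != 0) && (U == plane (Mof p.1 p.2))].
Proof.
apply/bigcupP/existsP.
  case=> i _; rewrite G_mem => /existsP [s hs]; by exists (i, s).
case=> [[i s] /= hs]; exists i => //; rewrite G_mem; apply/existsP; by exists s.
Qed.

Definition Dom := setX [set: 'I_n] [set~ (0 : 'rV[F]_3)].

Lemma main_fin : #|code A| = (N * n)%N /\
  (forall U V, U \in code A -> V \in code A -> U != V ->
     (\rank (U :&: V)%MS <= 1)%N).
Proof.
split.
  have e : code A = (fun p : 'I_n * 'rV[F]_3 => plane (Mof p.1 p.2)) @: Dom.
    apply/setP => U; rewrite code_mem; apply/existsP/imsetP.
      case=> [[i s]] /andP [hp /eqP ->]; exists (i, s) => //.
      by rewrite /Dom in_setX in_setT in_setC1.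
    case=> [[i s]]; rewrite /Dom in_setX in_setT in_setC1 /= => hp ->.
    by exists (i, s); rewrite hp eqxx.
  rewrite e card_in_imset.
    by rewrite /Dom cardsX cardsT card_ord cardsC1 card_mx mul1n -subn1 mulnC.
  move=> [i s] [j t]; rewrite /Dom !in_setX !in_setT !in_setC1 /= => hs ht e2.
  case: (eqVneq (i, s) (j, t)) => // ne.
  have := Mof_diff (ltn_ord i) (ltn_ord j) hs ht ne.
  by rewrite (plane_inj e2) subrr mxrank0.
move=> U V; rewrite !code_mem => /existsP [[i s] /andP [/= hs /eqP ->]].
move=> /existsP [[j t] /andP [/= ht /eqP ->]] ne.
rewrite plane_cap.
have ne' : (i, s) != (j, t) by apply: contra ne => /eqP [-> ->].
have := Mof_diff (ltn_ord i) (ltn_ord j) hs ht ne'.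
move: (\rank _) => r; clear; lia.
Qed.

End Fin.

Unset Implicit Arguments.

Theorem theorem4p7 (F : finFieldType) (A : 'M[F]_3) :
  singer_cycle A ->
  #|code A| = ((#|F| ^ 3 - 1) * (#|F| ^ 2 + #|F| + 1))%N /\
  (forall U V, U \in code A -> V \in code A -> U != V ->
     (\rank (U :&: V)%MS <= 1)%N).
Proof. move=> sA; exact: main_fin. Qed.
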